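(* Let $1<n\leq m$ be integers. Then (1) $d(u^{(0)},0)=\binom{\lfloor\frac{m+n}{2}\rfloor+1}{2}+\binom{\lceil\frac{m-n}{2}\rceil+1}{2}$; (2) if moreover $n<m$ and $2\nmid(m-n)$, then $d(u^{(1)},0)=\binom{\lceil\frac{m+n}{2}\rceil+1}{2}+\binom{\lfloor\frac{m-n}{2}\rfloor+1}{2}-\lceil\frac{m+1}{2}\rceil$.
   Context: Elements of $\mathbb{Z}_n$ are identified with representatives in $\{0,\dots,n-1\}$. The dYoke graph $Z_{n,m}$ has vertices $u=(u_0,\dots,u_{m+1})\in\mathbb{Z}_n\times\{-1,0,1\}^m\times\mathbb{Z}_n$ with $\sum u_i\equiv0\pmod n$; $u,v$ adjacent if there is $0\leq i\leq m$ with $u_j=v_j$ for $j\notin\{i,i+1\}$ and either ($u_i=v_i+1$, $u_{i+1}=v_{i+1}-1$) or ($u_i=v_i-1$, $u_{i+1}=v_{i+1}+1$), arithmetic in coordinates $0,m+1$ in $\mathbb{Z}_n$. $d$ is graph distance, $0$ the all-zero vertex. $u^{(0)}$ is the vertex with $u_i=1$ for $1\le i\le m$ and $u_0\equiv-\lfloor\frac{m-n}{2}\rfloor\pmod n$ ($u_{m+1}$ determined by the sum condition). For $n<m$ with $m-n$ odd, $u^{(1)}$ is the vertex with $u_{\lceil(m+1)/2\rceil}=0$, $u_i=1$ for all other $1\le i\le m$, and $u_0\equiv-\lfloor\frac{m-n}{2}\rfloor\pmod n$. *)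

(* Defs.v *)
From mathcomp Require Import all_boot all_order all_algebra.
Set Implicit Arguments. Unset Strict Implicit. Unset Printing Implicit Defensive.
Import Order.TTheory GRing.Theory Num.Theory.
Local Open Scope ring_scope.

(* A candidate vertex of Z_{n,m}: coordinates u_0, ..., u_{m+1}, stored as
   integers; end coordinates are representatives in {0,...,n-1}. *)
Definition vtx (m : nat) := {ffun 'I_m.+2 -> int}.

Definition is_end (m : nat) (j : 'I_m.+2) : bool :=
  (val j == 0%N) || (val j == m.+1).

Definition valid (n m : nat) (u : vtx m) : Prop :=
  (forall j : 'I_m.+2,
      if is_end j then (0 <= u j) /\ (u j < n%:Z)
      else u j \in [:: -1; 0; 1]) /\
  ((\sum_(j < m.+2) u j) %% n%:Z)%Z = 0.

Definition ceq (n m : nat) (j : 'I_m.+2) (x y : int) : Prop :=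
  if is_end j then (x %% n%:Z)%Z = (y %% n%:Z)%Z else x = y.

Definition adj (n m : nat) (u v : vtx m) : Prop :=
  valid n u /\ valid n v /\
  exists i : nat, (i <= m)%N /\
    (forall j : 'I_m.+2, val j <> i -> val j <> i.+1 -> u j = v j) /\
    (( (forall j : 'I_m.+2, val j = i -> ceq n j (u j) (v j + 1)) /\
       (forall j : 'I_m.+2, val j = i.+1 -> ceq n j (u j) (v j - 1)) ) \/
     ( (forall j : 'I_m.+2, val j = i -> ceq n j (u j) (v j - 1)) /\
       (forall j : 'I_m.+2, val j = i.+1 -> ceq n j (u j) (v j + 1)) )).

Inductive walk (n m : nat) : vtx m -> vtx m -> nat -> Prop :=
| walk0 u : valid n u -> walk n u u 0
| walkS u w v k : adj n u w -> walk n w v k -> walk n u v k.+1.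

Definition dist (n m : nat) (u v : vtx m) (k : nat) : Prop :=
  walk n u v k /\ forall k', walk n u v k' -> (k <= k')%N.

Definition zero_v (m : nat) : vtx m := [ffun => 0].

(* vertex with prescribed middle coordinates mid (for 1 <= i <= m), end
   coordinate u_0 = a mod n, and u_{m+1} determined by the sum condition *)
Definition mk_v (n m : nat) (a : int) (mid : nat -> int) : vtx m :=
  let u0 := (a %% n%:Z)%Z in
  let s := \sum_(1 <= i < m.+1) mid i in
  [ffun j : 'I_m.+2 =>
     if val j == 0%N then u0
     else if val j == m.+1 then ((- (u0 + s)) %% n%:Z)%Z
     else mid (val j)].

Definition u0v (n m : nat) : vtx m :=
  mk_v n m (- ((m - n)./2)%:Z) (fun _ => 1).

(* u^(1): as u^(0) but u_{ceil((m+1)/2)} = 0; ceil((m+1)/2) = (m+2)./2 *)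
Definition u1v (n m : nat) : vtx m :=
  mk_v n m (- ((m - n)./2)%:Z)
       (fun i => if i == (m.+2)./2 then 0 else 1).

(* Main.v *)
Require Import Defs.
From mathcomp Require Import all_boot all_order all_algebra.
From mathcomp Require Import zify ring.
Set Implicit Arguments. Unset Strict Implicit. Unset Printing Implicit Defensive.
Import Order.TTheory GRing.Theory Num.Theory.
Local Open Scope ring_scope.

Lemma modE (x d : int) : (x %% d)%Z = x - (x %/ d)%Z * d.
Proof. by rewrite {2}(divz_eq x d); ring. Qed.
Lemma modeq (x y d k : int) : x = y + k * d -> (x %% d)%Z = (y %% d)%Z.
Proof. by move=> ->; rewrite addrC modzMDl. Qed.
Lemma modeq_inv (x y d : int) : (x %% d)%Z = (y %% d)%Z -> x = y + ((x %/ d)%Z - (y %/ d)%Z) * d.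
Proof. move=> e. have := modE x d; have := modE y d. rewrite e. 
set q1 := (x %/ d)%Z; set q2 := (y %/ d)%Z; set r := (y %% d)%Z. move=> a b.
have -> : x = r + q1 * d by rewrite b; ring. rewrite a. ring. Qed.

Definition at_ (m : nat) (u : vtx m) (j : nat) : int :=
  if (j < m.+2)%N then u (inord j) else 0.
Definition Hs (m : nat) (u : vtx m) (i : nat) : int := \sum_(0 <= j < i.+1) at_ u j.
Definition Vn (n m : nat) (h : nat -> int) (j : nat) : int :=
  if j == 0%N then (h 0%N %% n%:Z)%Z
  else if j == m.+1 then ((- h m) %% n%:Z)%Z
  else h j - h j.-1.
Definition V (n m : nat) (h : nat -> int) : vtx m :=
  [ffun j : 'I_m.+2 => Vn n m h (val j)].
Definition lip (m : nat) (h : nat -> int) :=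
  forall j, (0 < j <= m)%N -> `|h j - h j.-1| <= 1.

Lemma at_V n m h j : (j < m.+2)%N -> at_ (V n m h) j = Vn n m h j.
Proof. by move=> hj; rewrite /at_ hj ffunE /= inordK. Qed.

Lemma HsS m (u : vtx m) i : Hs u i.+1 = Hs u i + at_ u i.+1.
Proof. by rewrite /Hs big_nat_recr. Qed.
Lemma Hs0 m (u : vtx m) : Hs u 0 = at_ u 0.
Proof. by rewrite /Hs big_nat1. Qed.

Lemma V_valid n m h : (0 < n)%N -> lip m h -> valid n (V n m h).
Proof.
move=> n0 hl; split.
- case=> j hj; rewrite ffunE /is_end /Vn /=.
  case: (j =P 0%N) => [_|j0] /=.
    split; [apply: modz_ge0; lia | apply: ltz_pmod; lia].
  case: (j =P m.+1) => [_|jm] /=.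
    split; [apply: modz_ge0; lia | apply: ltz_pmod; lia].
  have := hl j ltac:(lia).
  move: (h j - h j.-1) => x hx.
  have : x = -1 \/ x = 0 \/ x = 1 by lia.
  by case=> [->|[->|->]].
- rewrite (eq_bigr (fun j : 'I_m.+2 => Vn n m h j)); last by move=> j; rewrite ffunE.
  rewrite -(big_mkord xpredT (Vn n m h)).
  rewrite big_nat_recr //= big_nat_recl //.
  rewrite (eq_big_nat _ _ (F2 := fun i => h i.+1 - h i)); last first.
    move=> i hi; rewrite /Vn /=; case: (i.+1 =P m.+1) => //; lia.
  rewrite telescope_sumr // /Vn /= eqxx.
  rewrite -(mod0z n%:Z); apply: (@modeq _ 0 _ (- (h 0%N %/ n%:Z)%Z - (- h m %/ n%:Z)%Z)).
  rewrite !modE; ring.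
Qed.
Lemma at_inord m (u : vtx m) j : (j < m.+2)%N -> at_ u j = u (inord j).
Proof. by rewrite /at_ => ->. Qed.

Lemma adj_D n m (u w : vtx m) : (1 < m)%N -> adj n u w ->
  exists i0 (dl t : int), (i0 <= m)%N /\ (dl = 1 \/ dl = -1) /\ (i0 != 0%N -> t = 0) /\
    at_ u i0 = at_ w i0 + dl + t * n%:Z /\
    ((i0 < m)%N -> at_ u i0.+1 = at_ w i0.+1 - dl) /\
    (forall j, (j <= m)%N -> j != i0 -> j != i0.+1 -> at_ u j = at_ w j).
Proof.
move=> m1 [_ [_ [i [him [Heq HH]]]]].
have Ho : forall j, (j <= m)%N -> j != i -> j != i.+1 -> at_ u j = at_ w j.
  move=> j hj h1 h2; rewrite !at_inord; try lia.
  apply: Heq; rewrite /= inordK; lia.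
have key : forall dl : int, dl = 1 \/ dl = -1 ->
   (forall j : 'I_m.+2, val j = i -> ceq n j (u j) (w j + dl)) ->
   (forall j : 'I_m.+2, val j = i.+1 -> ceq n j (u j) (w j - dl)) ->
   exists i0 (dl t : int), (i0 <= m)%N /\ (dl = 1 \/ dl = -1) /\ (i0 != 0%N -> t = 0) /\
    at_ u i0 = at_ w i0 + dl + t * n%:Z /\
    ((i0 < m)%N -> at_ u i0.+1 = at_ w i0.+1 - dl) /\
    (forall j, (j <= m)%N -> j != i0 -> j != i0.+1 -> at_ u j = at_ w j).
  move=> dl hdl H1 H2.
  have := H1 (inord i) ltac:(rewrite /= inordK; lia).
  rewrite /ceq /is_end /= inordK; last lia.
  case: (i =P 0%N) => [i0|i0] /=.
    move/modeq_inv => e.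
    exists i, dl, ((u (inord i) %/ n%:Z)%Z - ((w (inord i) + dl) %/ n%:Z)%Z).
    refine (conj him (conj hdl (conj _ (conj _ (conj _ Ho))))).
    - by rewrite i0.
    - rewrite !at_inord; lia.
    - move=> hi; have := H2 (inord i.+1) ltac:(rewrite /= inordK; lia).
      rewrite /ceq /is_end /= inordK; last lia.
      have -> : (i.+1 == 0%N) || (i.+1 == m.+1) = false by lia.
      by rewrite !at_inord //; lia.
  have -> : (i == m.+1) = false by lia.
  move=> e; exists i, dl, 0; refine (conj him (conj hdl (conj _ (conj _ (conj _ Ho))))).
  - by [].
  - by rewrite !at_inord; try lia; rewrite e mul0r addr0.
  - move=> hi; have := H2 (inord i.+1) ltac:(rewrite /= inordK; lia).
    rewrite /ceq /is_end /= inordK; last lia.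
    have -> : (i.+1 == 0%N) || (i.+1 == m.+1) = false by lia.
    by rewrite !at_inord //; lia.
case: HH => [[H1 H2]|[H1 H2]].
  by apply: (key 1); [left|exact: H1|exact: H2].
apply: (key (-1)); [by right|exact: H1|].
by move=> j hj; rewrite opprK; apply: H2.
Qed.

Lemma adj_H n m (u w : vtx m) : (1 < m)%N -> adj n u w ->
  exists i0 (dl t : int), (i0 <= m)%N /\ (dl = 1 \/ dl = -1) /\
   forall i, (i <= m)%N -> Hs u i = Hs w i + t * n%:Z + (if i == i0 then dl else 0).
Proof.
move=> m1 ha; have [i0 [dl [t [hi0 [hdl [ht [e0 [e1 Ho]]]]]]]] := adj_D m1 ha.
exists i0, dl, t; split => //; split => //.
elim=> [|i IH] hi.
  rewrite !Hs0; case: (i0 =P 0%N) => [ei|ne].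
    by rewrite ei in e0 *; rewrite e0 /=; ring.
  rewrite ht; last by apply/eqP; lia.
  rewrite Ho //; try (apply/eqP; lia).
  have -> : (0 == i0)%N = false by apply/eqP; lia.
  ring.
rewrite !HsS IH; last lia.
case: (i.+1 =P i0) => [ei|ne].
  rewrite -ei in e0 ht *; rewrite e0 ht //.
  have -> : (i == i.+1) = false by lia.
  ring.
case: (i =P i0) => [ei|ne2].
  rewrite -ei in e1 *; rewrite e1; last lia.
  ring.
by rewrite Ho //; try (apply/eqP; lia).
Qed.

Definition Sf m (u : vtx m) (n : nat) (k : int) : int :=
  \sum_(0 <= i < m.+1) `|Hs u i - k * n%:Z|.

Lemma sum_ind (N i0 : nat) : \sum_(0 <= i < N) ((i == i0)%:R : int) = (i0 < N)%N%:R.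
Proof.
elim: N => [|N IH]; first by rewrite big_geq.
rewrite big_nat_recr //= IH.
case: (N =P i0) => [->|ne]; first by rewrite ltnn ltnSn add0r.

have -> : (i0 < N.+1)%N = (i0 < N)%N by lia.
by rewrite addr0.
Qed.

Lemma walk_lb n m (u v : vtx m) K : (1 < m)%N -> walk n u v K -> v = zero_v m ->
  exists k : int, Sf u n k <= K%:Z.
Proof.
move=> m1; elim=> {u v K} [u _ ->|u w v K ha _ IH ev].
  exists 0; rewrite /Sf big1 // => i _.
  rewrite /Hs big1 ?mul0r ?subr0 // => j _.
  by rewrite /at_ ffunE; case: ifP.
have [k hk] := IH ev.
have [i0 [dl [t [hi0 [hdl hH]]]]] := adj_H m1 ha.
exists (k + t).
have : Sf u n (k + t) <= Sf w n k + \sum_(0 <= i < m.+1) ((i == i0)%:R : int).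
  rewrite /Sf -big_split /=; apply: ler_sum_nat => i hi.
  rewrite hH; last lia.
  case: hdl => ->; case: (i == i0) => /=; lia.
rewrite sum_ind; have -> : (i0 < m.+1)%N by lia.
move=> h; apply: (le_trans h). lia.
Qed.

Lemma max_ex (f : nat -> nat) m : exists i, (i <= m)%N /\ forall j, (j <= m)%N -> (f j <= f i)%N.
Proof.
elim: m => [|m [i [hi hm]]]; first by exists 0%N; split => // j; rewrite leqn0 => /eqP ->.
case: (leqP (f m.+1) (f i)) => h.
  exists i; split; first lia. move=> j hj; case: (j =P m.+1) => [->//|ne]; apply: hm; lia.
exists m.+1; split => // j hj; case: (j =P m.+1) => [->//|ne].
apply: leq_trans (hm j _) (ltnW h); lia.
Qed.

Lemma sum_change (f g : nat -> int) N i : (i < N)%N -> (forall j, j != i -> g j = f j) ->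
  \sum_(0 <= j < N) f j = \sum_(0 <= j < N) g j + (f i - g i).
Proof.
move=> hi hg; elim: N hi => [//|N IH] hi.
rewrite !big_nat_recr //=.
case: (N =P i) => [e|ne].
  rewrite e.
  have -> : \sum_(0 <= j < i) f j = \sum_(0 <= j < i) g j.
    apply: eq_big_nat => j hj; rewrite hg //; apply/eqP; lia.
  ring.
rewrite IH; last lia. rewrite (hg N); last by apply/eqP. ring.
Qed.

Lemma sum_zero (f : nat -> int) N : (forall j, (j < N)%N -> f j = 0) -> \sum_(0 <= j < N) f j = 0.
Proof.
move=> h; rewrite (eq_big_nat _ _ (F2 := fun _ => 0)) ?big1 // => j hj; apply: h; lia.
Qed.

Lemma term_le_sum (f : nat -> int) N i : (forall j, 0 <= f j) -> (i < N)%N ->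
  f i <= \sum_(0 <= j < N) f j.
Proof.
move=> h0 hi; rewrite (sum_change (g := fun j => if j == i then 0 else f j) hi).
  rewrite eqxx subr0 lerDr; apply: sumr_ge0 => j _; case: ifP => //.
by move=> j /negbTE ->.
Qed.

Lemma V_adj n m h h' i (dl : int) : (0 < n)%N -> lip m h -> lip m h' -> (i <= m)%N ->
  (forall j, j != i -> h' j = h j) -> h' i = h i - dl -> (dl = 1 \/ dl = -1) ->
  adj n (V n m h) (V n m h').
Proof.
move=> n0 hl hl' him hh hhi hdl.
split; first exact: V_valid. split; first exact: V_valid.
exists i; split => //; split.
  case=> j hj /= h1 h2; rewrite !ffunE /Vn /=.
  case: (j =P 0%N) => [e|j0] /=.
    by rewrite hh //; apply/eqP; lia.
  case: (j =P m.+1) => [e|jm] /=.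
    by rewrite hh //; apply/eqP; lia.
  rewrite !hh //; apply/eqP; lia.
have F1 : forall j : 'I_m.+2, val j = i -> ceq n j (V n m h j) (V n m h' j + dl).
  case=> j hj /= ej; rewrite /ceq /is_end !ffunE /Vn /=; subst j.
  case: (i =P 0%N) => [e|i0] /=.
    subst i.
    apply: (@modeq _ _ _ ((h' 0%N %/ n%:Z)%Z - (h 0%N %/ n%:Z)%Z)).
    rewrite !modE hhi; ring.
  have -> : (i == m.+1) = false by apply/eqP; lia.
  rewrite hhi (hh i.-1); last by apply/eqP; lia.
  ring.
have F2 : forall j : 'I_m.+2, val j = i.+1 -> ceq n j (V n m h j) (V n m h' j - dl).
  case=> j hj /= ej; rewrite /ceq /is_end !ffunE /Vn /=; subst j.
  case: (i =P m) => [e|im] /=.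
    subst i; rewrite eqxx /=.
    apply: (@modeq _ _ _ ((- h' m %/ n%:Z)%Z - (- h m %/ n%:Z)%Z)).
    rewrite !modE hhi; ring.
  rewrite eqSS; have -> : (i == m) = false by apply/eqP.
  rewrite hhi (hh i.+1); last by apply/eqP; lia.
  ring.
case: hdl => e; subst dl; [left|right]; split => //.
Qed.

Lemma walk_ub n m : (0 < n)%N -> forall N h, lip m h ->
  \sum_(0 <= i < m.+1) `|h i| = N%:Z -> walk n (V n m h) (zero_v m) N.
Proof.
move=> n0; elim=> [|N IH] h hl hs.
  have hz : forall j, (j <= m)%N -> h j = 0.
    move=> j hj; have := term_le_sum (f := fun i => `|h i|) (N := m.+1) (i := j) (fun _ => normr_ge0 _) ltac:(lia).
    rewrite hs; lia.
  have Ve : V n m h = zero_v m.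
    apply/ffunP => -[j hj]; rewrite !ffunE /Vn /=.
    case: (j =P 0%N) => [e|j0] /=; first by rewrite hz // mod0z.
    case: (j =P m.+1) => [e|jm] /=; first by rewrite hz // oppr0 mod0z.
    rewrite !hz //; lia.
  have hv := V_valid n0 hl; rewrite Ve in hv *; exact: walk0.
have [i [him hmax]] := max_ex (fun j => `|h j|%N) m.
have hmax' : forall j, (j <= m)%N -> `|h j| <= `|h i|.
  move=> j hj; have := hmax j hj; lia.
have hpos : 0 < `|h i|.
  case: (ltrP 0 `|h i|) => // hle.
  have : \sum_(0 <= i < m.+1) `|h i| = 0.
    apply: sum_zero => j hj; have := hmax' j ltac:(lia); lia.
  rewrite hs; lia.
pose dl : int := if 0 < h i then 1 else -1.
pose h' := fun j => if j == i then h i - dl else h j.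
have hh : forall j, j != i -> h' j = h j by move=> j /negbTE; rewrite /h' => ->.
have hhi : h' i = h i - dl by rewrite /h' eqxx.
have hdl : dl = 1 \/ dl = -1 by rewrite /dl; case: ifP; [left|right].
have hl' : lip m h'.
  move=> j hj; rewrite /h'.
  have := hl j hj.
  case: (j =P i) => [e|ne]; case: (j.-1 =P i) => [e'|ne'] //=; try lia.
    subst i; have := hmax' j.-1 ltac:(lia); rewrite /dl; case: ifP; lia.
  subst i; have := hmax' j ltac:(lia); rewrite /dl; case: ifP; lia.
apply: (walkS (w := V n m h')).
  exact: (V_adj n0 hl hl' him hh hhi hdl).
apply: IH => //.
have := sum_change (f := fun j => `|h j|) (g := fun j => `|h' j|) (N := m.+1) (i := i) ltac:(lia).
move=> /(_ (fun j hj => congr1 _ (hh j hj))).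
rewrite hs hhi /dl /=. case: ifP => ?; set S := \sum_(0 <= j < m.+1) `|h' j|; move=> e; lia.
Qed.

Lemma Hs_V n m h i : (i <= m)%N -> Hs (V n m h) i = h i - (h 0%N %/ n%:Z)%Z * n%:Z.
Proof.
elim: i => [|i IH] hi.
  by rewrite Hs0 at_V // /Vn /= modE.
rewrite HsS IH; last lia.
rewrite at_V; last lia.
rewrite /Vn /=; have -> : (i.+1 == m.+1) = false by lia.
ring.
Qed.

Lemma Sf_V n m h k : Sf (V n m h) n k =
  \sum_(0 <= i < m.+1) `|h i - ((h 0%N %/ n%:Z)%Z + k) * n%:Z|.
Proof.
apply: eq_big_nat => i hi; rewrite Hs_V; last lia.
congr (`| _ |); ring.
Qed.

Definition W (N : nat) (b : int) : int := \sum_(0 <= i < N) `|i%:Z + b|.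

Lemma Wstep N (b : int) : W N (b + 1) = W N b + `|N%:Z + b| - `|b|.
Proof.
rewrite /W.
have e : \sum_(0 <= i < N.+1) `|i%:Z + b| = `|b| + \sum_(0 <= i < N) `|i%:Z + (b + 1)|.
  rewrite big_nat_recl // add0r; congr (_ + _); apply: eq_big_nat => i _; congr (`| _ |).
  rewrite -addn1 PoszD; ring.
have e2 := e; rewrite big_nat_recr //= in e2.
apply: (addrI (`|b|)); rewrite -e2; ring.
Qed.


Lemma W0 P : W P.+1 (- P%:Z) = 'C(P + 1, 2)%:Z.
Proof.
elim: P => [|P IH]; first by rewrite /W big_nat1 subrr normr0 bin_small; reflexivity.
rewrite /W big_nat_recl //.
rewrite (eq_big_nat _ _ (F2 := fun i => `|i%:Z + - P%:Z|)); last first.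
  move=> i _; congr (`| _ |); lia.
rewrite -/(W P.+1 _) IH.
have -> : (P.+1 + 1 = (P + 1).+1)%N by lia.
rewrite binS bin1; lia.
Qed.

Lemma WA P Q : W (P + Q).+1 (- P%:Z) = 'C(P + 1, 2)%:Z + 'C(Q + 1, 2)%:Z.
Proof.
elim: Q => [|Q IH]; first by rewrite addn0 W0 [X in _ + X%:Z]bin_small // addr0.
rewrite /W big_nat_recr //= -/(W _ _) addnS IH.
have -> : (Q.+1 + 1 = (Q + 1).+1)%N by lia.
rewrite binS bin1; lia.
Qed.

Lemma mono_up (f : int -> int) b0 : (forall b, b0 <= b -> f b <= f (b + 1)) ->
  forall b, b0 <= b -> f b0 <= f b.
Proof.
move=> hf b hb; have [d ->] : exists d : nat, b = b0 + d%:Z by exists `|b - b0|%N; lia.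
elim: d {hb} => [|d IH]; first by rewrite addr0.
apply: (le_trans IH); have -> : b0 + d.+1%:Z = (b0 + d%:Z) + 1 by lia.
apply: hf; lia.
Qed.

Lemma mono_down (f : int -> int) b0 : (forall b, b <= b0 -> f b <= f (b - 1)) ->
  forall b, b <= b0 -> f b0 <= f b.
Proof.
move=> hf b hb; have [d ->] : exists d : nat, b = b0 - d%:Z by exists `|b0 - b|%N; lia.
elim: d {hb} => [|d IH]; first by rewrite subr0.
apply: (le_trans IH); have -> : b0 - d.+1%:Z = (b0 - d%:Z) - 1 by lia.
apply: hf; lia.
Qed.

Lemma split_sum (g : int -> int) c d : (0 < c)%N ->
  \sum_(0 <= i < (c + d).+1) g (if (i < c)%N then i%:Z else i%:Z - 1)
  = \sum_(0 <= i < c + d) g i%:Z + g (c%:Z - 1).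
Proof.
move=> c0; elim: d => [|d IH].
  rewrite addn0 big_nat_recr //= ltnn; congr (_ + _).
  by apply: eq_big_nat => i hi; have -> : (i < c)%N by lia.
rewrite big_nat_recr //= addnS IH.
have -> : ((c + d).+1 < c)%N = false by lia.
rewrite big_nat_recr //=.
have -> : (c + d).+1%:Z - 1 = (c + d)%:Z by lia.
ring.
Qed.

Lemma binS2 x : 'C(x.+1 + 1, 2) = ('C(x + 1, 2) + x.+1)%N.
Proof. by rewrite addn1 binS bin1 addn1. Qed.

Lemma part1 n m : (1 < n)%N -> (n <= m)%N ->
  dist n (u0v n m) (zero_v m) ('C((m + n)./2 + 1, 2) + 'C(uphalf (m - n) + 1, 2))%N.
Proof.
move=> hn hnm.
have [F eF] : exists F, F = (m + n)./2 by eexists.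
have [g eg] : exists g, g = uphalf (m - n) by eexists.
have [f ef] : exists f, f = (m - n)./2 by eexists.
rewrite /u0v -eF -eg -ef.
have hm : (m = F + g)%N by lia.
have hF : (F%:Z = f%:Z + n%:Z) by lia.
pose h0 := fun j : nat => j%:Z - F%:Z.
have hl : lip m h0 by move=> j hj; rewrite /h0; lia.
have eu : mk_v n m (- f%:Z) (fun _ => 1) = V n m h0.
  apply/ffunP => -[j hj]; rewrite /mk_v !ffunE /Vn /=.
  rewrite sumr_const_nat natz.
  case: (j =P 0%N) => [_|j0] /=.
    apply: (@modeq _ _ _ 1); rewrite /h0; lia.
  case: (j =P m.+1) => [_|jm] /=.
    apply: (@modeq _ _ _ ((- f%:Z %/ n%:Z)%Z - 1)).
    rewrite modE /h0 hF; have -> : (m.+1 - 1)%N = m by lia.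
    ring.
  rewrite /h0; lia.
rewrite eu.
have hsum : \sum_(0 <= i < m.+1) `|h0 i| = ('C(F + 1, 2) + 'C(g + 1, 2))%N%:Z.
  rewrite (eq_big_nat _ _ (F2 := fun i => `|i%:Z + - F%:Z|)); last by move=> i _; rewrite /h0.
  by rewrite -/(W _ _) {1}hm WA PoszD.
split; first exact: (walk_ub (ltnW hn) hl hsum).
move=> k' hw.
have [k hk] := walk_lb (leq_trans hn hnm) hw erefl.
rewrite Sf_V in hk.
set c := (_ + k) in hk.
have eW : \sum_(0 <= i < m.+1) `|h0 i - c * n%:Z| = W m.+1 (- F%:Z - c * n%:Z).
  apply: eq_big_nat => i _; rewrite /h0; congr (`| _ |); ring.
rewrite eW in hk.
suff : ('C(F + 1, 2) + 'C(g + 1, 2))%N%:Z <= W m.+1 (- F%:Z - c * n%:Z) by lia.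
case: (lerP 0 c) => hc.
  have hcn : 0 <= c * n%:Z by apply: mulr_ge0; lia.
  rewrite -hsum (eq_big_nat _ _ (F2 := fun i => `|i%:Z + - F%:Z|)); last by move=> i _; rewrite /h0.
  rewrite -/(W _ _).
  apply: (mono_down (f := W m.+1)); last lia.
  move=> b hb; have := Wstep m.+1 (b - 1); rewrite subrK; lia.
have hcn : c * n%:Z <= - n%:Z.
  have : 1 * n%:Z <= (- c) * n%:Z by apply: ler_wpM2r; lia.
  rewrite mul1r mulNr; lia.
apply: (@le_trans _ _ (W m.+1 (- f%:Z))); last first.
  apply: (mono_up (f := W m.+1)); last lia.
  move=> b hb; have := Wstep m.+1 b; lia.
have hm' : (m = f + (m - f))%N by lia.
rewrite {1}hm' WA.
have [[e1 e2]|[e1 e2]] : (f = g /\ m - f = F)%N \/ (g = f.+1 /\ m - f = F.+1)%N by lia.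
  by rewrite e2 e1 addrC.
rewrite e2 e1 !binS2; lia.
Qed.

Lemma part2 n m : (1 < n)%N -> (n < m)%N -> odd (m - n) ->
   exists N : nat, dist n (u1v n m) (zero_v m) N /\
     N%:Z = ('C(uphalf (m + n) + 1, 2) + 'C((m - n)./2 + 1, 2))%:Z
            - ((m.+2)./2)%:Z.
Proof.
move=> hn hnm hodd.
have [F eF] : exists F, F = (m + n)./2 by eexists.
have [c ec] : exists c, c = (m.+2)./2 by eexists.
have [f ef] : exists f, f = (m - n)./2 by eexists.
rewrite /u1v -ec -ef.
have hm : (m = (F + f).+1)%N by lia.
have hF : (F%:Z = f%:Z + n%:Z) by lia.
have hc1 : (0 < c)%N by lia.
have hcm : (c <= m)%N by lia.
have hcF : (c <= F)%N by lia.
have h2c : (m.+1 <= c.*2)%N by lia.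
pose h1 := fun j : nat => (if (j < c)%N then j%:Z else j%:Z - 1) - F%:Z.
have hl : lip m h1.
  move=> j hj; rewrite /h1; case: ifP; case: ifP; lia.
pose G := fun i : nat => if i == c then 0 else 1 : int.
have hG : \sum_(1 <= i < m.+1) G i = m%:Z - 1.
  have e0 := @big_ltn int 0 +%R 0 m.+1 (fun i => G i) (ltn0Sn m).
  have e1 := sum_change (f := fun _ => 1 : int) (g := G) (N := m.+1) (i := c) ltac:(lia).
  have e2 : (forall j, j != c -> G j = 1) by move=> j /negbTE; rewrite /G => ->.
  have gc : G c = 0 by rewrite /G eqxx.
  have g0 : G 0%N = 1 by rewrite /G; case: eqP => //; lia.
  move: (e1 e2); rewrite sumr_const_nat natz gc e0 g0 => e.
  have -> : \sum_(1 <= i < m.+1) G i = (m.+1 - 0)%N%:Z - 1 - 1 by rewrite e; ring.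
  lia.
have eu : mk_v n m (- f%:Z) G = V n m h1.
  apply/ffunP => -[j hj]; rewrite /mk_v !ffunE /Vn /= hG.
  case: (j =P 0%N) => [_|j0] /=.
    apply: (@modeq _ _ _ 1); rewrite /h1 hc1; lia.
  case: (j =P m.+1) => [_|jm] /=.
    apply: (@modeq _ _ _ ((- f%:Z %/ n%:Z)%Z - 1)).
    rewrite modE /h1 hF; have -> : (m < c)%N = false by lia.
    ring.
  rewrite /h1 /G; case: (j =P c) => [e|ne]; case: ifP; case: ifP; lia.
rewrite eu.
pose T1 := fun b => W m b + `|(c%:Z - 1) + b|.
have eT : forall K : int, \sum_(0 <= i < m.+1) `|h1 i - K * n%:Z| = T1 (- F%:Z - K * n%:Z).
  move=> K.
  have em : m = (c + (m - c))%N by lia.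
  have S := split_sum (fun x => `|x + (- F%:Z - K * n%:Z)|) (m - c) hc1.
  rewrite -em /= in S.
  rewrite /T1 /W -S.
  by apply: eq_big_nat => i _; rewrite /h1; congr (`| _ |); ring.
set N := ('C(F + 1, 2) + 'C(f + 1, 2) + (F + 1 - c))%N.
have hT : T1 (- F%:Z) = N%:Z.
  rewrite /T1 {1}hm WA /N.
  have : (F + 1 - c)%N%:Z = `|c%:Z - 1 + - F%:Z| by lia.
  lia.
exists N; split; last first.
  have -> : uphalf (m + n) = F.+1 by lia.
  rewrite binS2 /N; lia.
split.
  apply: (walk_ub (ltnW hn) hl).
  rewrite -hT -[in RHS](subr0 (- F%:Z)) -(mul0r n%:Z) -eT.
  by apply: eq_big_nat => i _; rewrite mul0r subr0.
move=> k' hw.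
have [k hk] := walk_lb (leq_trans hn (ltnW hnm)) hw erefl.
rewrite Sf_V eT in hk.
set K := (_ + k) in hk.
suff : N%:Z <= T1 (- F%:Z - K * n%:Z) by lia.
case: (lerP 0 K) => hK.
  have hcn : 0 <= K * n%:Z by apply: mulr_ge0; lia.
  rewrite -hT.
  apply: (mono_down (f := T1)); last lia.
  move=> b hb; rewrite /T1; have := Wstep m (b - 1); rewrite subrK; lia.
have hcn : K * n%:Z <= - n%:Z.
  have : 1 * n%:Z <= (- K) * n%:Z by apply: ler_wpM2r; lia.
  rewrite mul1r mulNr; lia.
apply: (@le_trans _ _ (T1 (- f%:Z))); last first.
  apply: (mono_up (f := T1)); last lia.
  move=> b hb; rewrite /T1; have := Wstep m b; lia.
rewrite /T1 {1}hm addnC WA /N.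
lia.
Qed.

Theorem lemma5p22 (n m : nat) (hn : (1 < n)%N) (hnm : (n <= m)%N) :
  dist n (u0v n m) (zero_v m)
    ('C((m + n)./2 + 1, 2) + 'C(uphalf (m - n) + 1, 2))%N /\
  ((n < m)%N -> odd (m - n) ->
   exists N : nat, dist n (u1v n m) (zero_v m) N /\
     N%:Z = ('C(uphalf (m + n) + 1, 2) + 'C((m - n)./2 + 1, 2))%:Z
            - ((m.+2)./2)%:Z).
Proof.
split; first exact: part1.
by move=> h1 h2; apply: part2.
Qed.
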